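(* Let $A\in\mathbb{R}^{m\times n}$, $E\in\mathbb{R}^{m\times m}$, $F\in\mathbb{R}^{n\times n}$ with $I_m+E$ and $I_n+F$ nonsingular, and let $b,\epsilon\in\mathbb{R}^m$. Set $\tilde A = (I_m+E)A(I_n+F) = A+\Delta A$ with $\Delta A = EA + AF + EAF$, and $\tilde b = b+\epsilon$. Assume the noiseless system $Ax=b$ is consistent and let $x_{\rm LS}=A^\dagger b$. Let $(x_k)_{k\ge0}$ be the iterates of the randomized Kaczmarz algorithm applied to $\tilde A x\approx\tilde b$, with starting point $x_0$ satisfying $x_0 - x_{\rm LS}\in\operatorname{range}(\tilde A^\top)$. Then for every $k\ge0$, $$\mathbb{E}\|x_k - x_{\rm LS}\|^2 \le \left(1-\frac{1}{\tilde R}\right)^k\|x_0 - x_{\rm LS}\|^2 + \frac{\|\Delta A\, x_{\rm LS} - \epsilon\|^2}{\sigma_{\min}^2(\tilde A)},$$ where $\tilde R = \|\tilde A^\dagger\|^2\,\|\tilde A\|_F^2$.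
   Context: Norms of vectors are Euclidean; $\|M\|$ is the spectral norm, $\|M\|_F$ the Frobenius norm, $M^\dagger$ the Moore–Penrose pseudoinverse, $\sigma_{\min}(M)$ the smallest nonzero singular value of $M$, and $I_m$ the $m\times m$ identity. The randomized Kaczmarz (RK) algorithm applied to a system $\tilde A x\approx \tilde b$ (with $\tilde A$ having nonzero rows $\tilde a_1^\top,\dots,\tilde a_m^\top$) generates, from a starting point $x_0$, the iterates $x_{k+1} = x_k - \frac{\tilde a_{i(k)}^\top x_k - \tilde b_{i(k)}}{\|\tilde a_{i(k)}\|^2}\tilde a_{i(k)}$, where the indices $i(k)$ are drawn independently with $\Pr[i(k)=i] = \|\tilde a_i\|^2/\|\tilde A\|_F^2$. The expectation is over these random indices. *)

(* Defs.v *)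
From HB Require Import structures.
From mathcomp Require Import all_boot all_order all_algebra.
From mathcomp Require Import boolp classical_sets reals.
Set Implicit Arguments. Unset Strict Implicit. Unset Printing Implicit Defensive.
Import Order.TTheory GRing.Theory Num.Theory.
Local Open Scope ring_scope.
Local Open Scope classical_set_scope.

Section Defs.
Variable R : realType.

Definition vnorm n (v : 'cV[R]_n) : R := Num.sqrt (\sum_i (v i 0) ^+ 2).

Definition frob m n (A : 'M[R]_(m, n)) : R :=
  Num.sqrt (\sum_i \sum_j (A i j) ^+ 2).

Definition specnorm m n (A : 'M[R]_(m, n)) : R :=
  sup [set vnorm (A *m x) | x in [set x : 'cV[R]_n | vnorm x = 1]].

Definition penrose m n (A : 'M[R]_(m, n)) (X : 'M[R]_(n, m)) : Prop :=
  [/\ A *m X *m A = A, X *m A *m X = X,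
      (A *m X)^T = A *m X & (X *m A)^T = X *m A].

Definition pinv m n (A : 'M[R]_(m, n)) : 'M[R]_(n, m) :=
  xget 0 [set X | penrose A X].

(* smallest nonzero singular value: singular values are the s >= 0 with
   s^2 an eigenvalue of A^T A *)
Definition sigma_min m n (A : 'M[R]_(m, n)) : R :=
  inf [set s : R | 0 < s /\ eigenvalue (A^T *m A) (s ^+ 2)].

Definition rk_step m n (At : 'M[R]_(m, n)) (bt : 'cV[R]_m)
    (x : 'cV[R]_n) (i : 'I_m) : 'cV[R]_n :=
  let a := (row i At)^T in
  x - (((row i At *m x) 0 0 - bt i 0) / (vnorm a) ^+ 2) *: a.

Definition rk_iter m n (At : 'M[R]_(m, n)) (bt : 'cV[R]_m)
    (x0 : 'cV[R]_n) (s : seq 'I_m) : 'cV[R]_n :=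
  foldl (rk_step At bt) x0 s.

Definition rk_prob m n (At : 'M[R]_(m, n)) (i : 'I_m) : R :=
  (vnorm (row i At)^T) ^+ 2 / (frob At) ^+ 2.

(* E || x_k - z ||^2 over the i.i.d. random indices i(0..k-1) *)
Definition rk_expect_sqdist m n (At : 'M[R]_(m, n)) (bt : 'cV[R]_m)
    (x0 z : 'cV[R]_n) (k : nat) : R :=
  \sum_(s : k.-tuple 'I_m)
     (\prod_(i <- s) rk_prob At i) * (vnorm (rk_iter At bt x0 s - z)) ^+ 2.

End Defs.

(* Main.v *)
Require Import Defs.
From HB Require Import structures.
From mathcomp Require Import all_boot all_order all_algebra.
From mathcomp Require Import boolp classical_sets reals.
From mathcomp.algebra_tactics Require Import ring lra.
Import Order.TTheory GRing.Theory Num.Theory.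
Set Implicit Arguments. Unset Strict Implicit. Unset Printing Implicit Defensive.
Local Open Scope ring_scope.

Section Aux.
Variable R : realType.

Definition dot n (u v : 'cV[R]_n) : R := (u^T *m v) 0 0.

Lemma dotE n (u v : 'cV[R]_n) : dot u v = \sum_i u i 0 * v i 0.
Proof. by rewrite /dot mxE; apply: eq_bigr => i _; rewrite mxE. Qed.

Lemma dotC n (u v : 'cV[R]_n) : dot u v = dot v u.
Proof. by rewrite !dotE; apply: eq_bigr => i _; rewrite mulrC. Qed.

Lemma dot_ge0 n (u : 'cV[R]_n) : 0 <= dot u u.
Proof. by rewrite dotE; apply: sumr_ge0 => i _; rewrite -expr2 sqr_ge0. Qed.

Lemma dot_eq0 n (u : 'cV[R]_n) : dot u u = 0 -> u = 0.
Proof.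
rewrite dotE => H; apply/matrixP => i j; rewrite (ord1 j) mxE.
have H2 : forall i, true -> 0 <= u i 0 * u i 0 by move=> k _; rewrite -expr2 sqr_ge0.
have := psumr_eq0P H2 H (i := i) isT.
by move/eqP; rewrite mulf_eq0 orbb => /eqP.
Qed.

Lemma vnormE n (u : 'cV[R]_n) : vnorm u = Num.sqrt (dot u u).
Proof. by rewrite /vnorm dotE; congr Num.sqrt; apply: eq_bigr => i _; rewrite expr2. Qed.

Lemma vnorm_sq n (u : 'cV[R]_n) : vnorm u ^+ 2 = dot u u.
Proof. by rewrite vnormE sqr_sqrtr // dot_ge0. Qed.

Lemma vnorm_ge0 n (u : 'cV[R]_n) : 0 <= vnorm u.
Proof. by rewrite vnormE sqrtr_ge0. Qed.

Lemma dotDl n (u w v : 'cV[R]_n) : dot (u + w) v = dot u v + dot w v.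
Proof. by rewrite /dot linearD /= mulmxDl mxE. Qed.

Lemma dotDr n (u w v : 'cV[R]_n) : dot v (u + w) = dot v u + dot v w.
Proof. by rewrite /dot mulmxDr mxE. Qed.

Lemma dotZl n a (u v : 'cV[R]_n) : dot (a *: u) v = a * dot u v.
Proof. by rewrite /dot linearZ /= -scalemxAl mxE. Qed.

Lemma dotZr n a (u v : 'cV[R]_n) : dot v (a *: u) = a * dot v u.
Proof. by rewrite /dot -scalemxAr mxE. Qed.

Lemma dotNl n (u v : 'cV[R]_n) : dot (- u) v = - dot u v.
Proof. by rewrite -scaleN1r dotZl mulN1r. Qed.

Lemma dotNr n (u v : 'cV[R]_n) : dot v (- u) = - dot v u.
Proof. by rewrite -scaleN1r dotZr mulN1r. Qed.

Lemma dotBl n (u w v : 'cV[R]_n) : dot (u - w) v = dot u v - dot w v.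
Proof. by rewrite dotDl dotNl. Qed.

Lemma dotBr n (u w v : 'cV[R]_n) : dot v (u - w) = dot v u - dot v w.
Proof. by rewrite dotDr dotNr. Qed.

Lemma dot0l n (v : 'cV[R]_n) : dot 0 v = 0.
Proof. by rewrite /dot trmx0 mul0mx mxE. Qed.

Lemma dot0r n (v : 'cV[R]_n) : dot v 0 = 0.
Proof. by rewrite /dot mulmx0 mxE. Qed.

Lemma dotM m n (M : 'M[R]_(m, n)) u v : dot u (M *m v) = dot (M^T *m u) v.
Proof. by rewrite /dot trmx_mul trmxK mulmxA. Qed.

Lemma sq_le (x y : R) : 0 <= y -> x ^+ 2 <= y ^+ 2 -> x <= y.
Proof. move=> y0 h; rewrite !expr2 in h; nra. Qed.

Lemma psd_cs n (N : 'M[R]_n) (u v : 'cV[R]_n) :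
  N^T = N -> (forall w, 0 <= dot w (N *m w)) ->
  dot u (N *m v) ^+ 2 <= dot u (N *m u) * dot v (N *m v).
Proof.
move=> Ns Np.
set a := dot u (N *m u); set b := dot u (N *m v); set d := dot v (N *m v).
have hb : dot v (N *m u) = b by rewrite dotM Ns dotC.
have Q : forall x y, dot (x *: u + y *: v) (N *m (x *: u + y *: v)) =
    x ^+ 2 * a + 2 * x * y * b + y ^+ 2 * d.
  move=> x y; rewrite !mulmxDr -!scalemxAr !dotDl !dotDr !dotZl !dotZr hb.
  rewrite -/a -/b -/d; ring.
have ha : 0 <= a by exact: Np.
have hd : 0 <= d by exact: Np.
have h1 := Np (d *: u + (- b) *: v); rewrite Q in h1.
have h2 := Np ((- b) *: u + a *: v); rewrite Q in h2.
have h3 := Np (1 *: u + 1 *: v); rewrite Q in h3.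
have h4 := Np (1 *: u + (-1) *: v); rewrite Q in h4.
have [d0|d0] := eqVneq d 0.
  have [a0|a0] := eqVneq a 0.
    rewrite d0 a0 in h3 h4 *; nra.
  have ap : 0 < a by rewrite lt_def a0 ha.
  nra.
have dp : 0 < d by rewrite lt_def d0 hd.
nra.
Qed.

Lemma cs n (u v : 'cV[R]_n) : dot u v ^+ 2 <= dot u u * dot v v.
Proof.
have := @psd_cs n 1%:M u v (trmx1 _ _) (fun w => _).
rewrite !mul1mx; apply; move=> w; rewrite mul1mx; exact: dot_ge0.
Qed.

Lemma row_dot m n (Y : 'M[R]_(m,n)) v i : (Y *m v) i 0 = dot (row i Y)^T v.
Proof. by rewrite /dot trmxK -row_mul [RHS]mxE. Qed.

Lemma dot_row m n (Y : 'M[R]_(m,n)) i : dot (row i Y)^T (row i Y)^T = \sum_j Y i j ^+ 2.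
Proof. by rewrite dotE; apply: eq_bigr => j _; rewrite !mxE expr2. Qed.

Lemma frob_sq m n (Y : 'M[R]_(m,n)) : frob Y ^+ 2 = \sum_i dot (row i Y)^T (row i Y)^T.
Proof.
rewrite /frob sqr_sqrtr; last by apply: sumr_ge0 => i _; apply: sumr_ge0 => j _; exact: sqr_ge0.
by apply: eq_bigr => i _; rewrite dot_row.
Qed.

Lemma dot_frob m n (Y : 'M[R]_(m,n)) v : dot (Y *m v) (Y *m v) <= frob Y ^+ 2 * dot v v.
Proof.
rewrite frob_sq mulr_suml dotE; apply: ler_sum => i _.
by rewrite row_dot -expr2 cs.
Qed.

Lemma vnorm_unit n (v : 'cV[R]_n) : v != 0 -> vnorm ((vnorm v)^-1 *: v) = 1.
Proof.
move=> nz; have dp : 0 < dot v v.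
  by rewrite lt_def dot_ge0 andbT; apply/eqP => /dot_eq0; apply/eqP.
have sp : 0 < vnorm v by rewrite vnormE sqrtr_gt0.
rewrite vnormE dotZl dotZr -vnorm_sq.
by rewrite mulrA -expr2 -exprMn mulVf ?gt_eqF // expr1n sqrtr1.
Qed.

Definition specset m n (Y : 'M[R]_(m,n)) :=
  [set vnorm (Y *m x) | x in [set x : 'cV[R]_n | vnorm x = 1]]%classic.

Lemma specset_ub m n (Y : 'M[R]_(m,n)) : has_ubound (specset Y).
Proof.
exists (frob Y); move=> y [x /= x1 <-].
rewrite vnormE -(@ger0_norm _ (frob Y)); last by rewrite /frob sqrtr_ge0.
rewrite -sqrtr_sqr ler_sqrt ?sqr_ge0 //.
by have := dot_frob Y x; rewrite -(vnorm_sq x) x1 expr1n mulr1.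
Qed.

Lemma specnorm_unit m n (Y : 'M[R]_(m,n)) x : vnorm x = 1 -> vnorm (Y *m x) <= specnorm Y.
Proof. by move=> x1; apply: (ub_le_sup (specset_ub Y)); exists x. Qed.

Lemma specnorm_ub m n (Y : 'M[R]_(m,n)) v :
  dot (Y *m v) (Y *m v) <= specnorm Y ^+ 2 * dot v v.
Proof.
have [->|nz] := eqVneq v 0; first by rewrite mulmx0 !dot0l mulr0.
set s := vnorm v.
have dp : 0 < dot v v.
  by rewrite lt_def dot_ge0 andbT; apply/eqP => /dot_eq0; apply/eqP.
have sp : 0 < s by rewrite /s vnormE sqrtr_gt0.
have H := specnorm_unit Y (vnorm_unit nz).
rewrite -scalemxAr in H.
have H0 := vnorm_ge0 (s^-1 *: (Y *m v)).
have H2 : vnorm (s^-1 *: (Y *m v)) ^+ 2 <= specnorm Y ^+ 2.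
  nra.
rewrite vnorm_sq dotZl dotZr in H2.
rewrite -(vnorm_sq v) -/s.
have st : s * s^-1 = 1 by rewrite mulfV ?gt_eqF.
set D := dot _ _ in H2 *.
have : s ^+ 2 * (s^-1 * (s^-1 * D)) = D.
  have sn : s != 0 by rewrite gt_eqF.
  by field.
move=> <-; rewrite mulrC; apply: ler_wpM2r; first by rewrite sqr_ge0.
done.
Qed.

Lemma specnorm_ge0 m n (Y : 'M[R]_(m,n)) (v : 'cV[R]_n) : v != 0 -> 0 <= specnorm Y.
Proof.
move=> nz; apply: le_trans (specnorm_unit Y (vnorm_unit nz)); exact: vnorm_ge0.
Qed.

Lemma specnorm_le m n (Y : 'M[R]_(m,n)) B (v0 : 'cV[R]_n) : v0 != 0 -> 0 <= B ->
  (forall v, dot (Y *m v) (Y *m v) <= B ^+ 2 * dot v v) -> specnorm Y <= B.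
Proof.
move=> nz B0 H; apply: ge_sup.
  by exists (vnorm (Y *m ((vnorm v0)^-1 *: v0))); exists ((vnorm v0)^-1 *: v0) => //; exact: vnorm_unit.
move=> y [x /= x1 <-].
rewrite vnormE -(@ger0_norm _ B) // -sqrtr_sqr ler_sqrt ?sqr_ge0 //.
by have := H x; rewrite -(vnorm_sq x) x1 expr1n mulr1.
Qed.

Lemma exists_nz_image m n (Y : 'M[R]_(m,n)) : Y != 0 -> exists v : 'cV[R]_n, Y *m v != 0.
Proof.
move=> nz; apply: contrapT => H.
have H' : forall v : 'cV[R]_n, Y *m v = 0.
  by move=> v; case: (eqVneq (Y *m v) 0) => // Hv; exfalso; apply: H; exists v.
move/eqP: nz; apply; apply/matrixP => i j.
have := congr1 (fun M : 'cV[R]_m => M i 0) (H' (delta_mx j 0)).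
by rewrite -colE !mxE.
Qed.

Lemma specnorm_gt0 m n (Y : 'M[R]_(m,n)) : Y != 0 -> 0 < specnorm Y.
Proof.
move=> /exists_nz_image [v nz].
have vnz : v != 0 by apply: contraNneq nz => ->; rewrite mulmx0.
have L0 := specnorm_ge0 Y vnz.
rewrite lt_def L0 andbT; apply/eqP => L0'.
have := specnorm_ub Y v; rewrite L0' expr0n /= mul0r => H.
have : dot (Y *m v) (Y *m v) = 0 by apply/eqP; rewrite eq_le H dot_ge0.
by move/dot_eq0/eqP; rewrite (negbTE nz).
Qed.
Lemma penrose_fact m r n (C : 'M[R]_(m, r)) (D : 'M[R]_(r, n)) Ci Di :
  Ci *m C = 1%:M -> D *m Di = 1%:M -> (C *m Ci)^T = C *m Ci -> (Di *m D)^T = Di *m D ->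
  penrose (C *m D) (Di *m Ci).
Proof.
move=> hC hD sC sD.
have AX : C *m D *m (Di *m Ci) = C *m Ci.
  by rewrite !mulmxA -(mulmxA C D Di) hD mulmx1.
have XA : Di *m Ci *m (C *m D) = Di *m D.
  by rewrite !mulmxA -(mulmxA Di Ci C) hC mulmx1.
split.
- by rewrite AX -mulmxA (mulmxA Ci C D) hC mul1mx.
- by rewrite XA -mulmxA (mulmxA D Di Ci) hD mul1mx.
- by rewrite AX.
- by rewrite XA.
Qed.

Lemma gram_unit p r (C : 'M[R]_(p, r)) : row_free C^T -> C^T *m C \in unitmx.
Proof.
move=> fr; rewrite -row_free_unit; apply: inj_row_free => v H.
have : dot (C *m v^T) (C *m v^T) = 0.
  by rewrite /dot trmx_mul trmxK mulmxA -(mulmxA v) H mul0mx mxE.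
move/dot_eq0 => H2.
have : v *m C^T = 0 by rewrite -[v *m _]trmxK trmx_mul trmxK H2 trmx0.
by move/eqP; rewrite mulmx_free_eq0 // => /eqP.
Qed.

Lemma pinv_fact m r n (C : 'M[R]_(m, r)) (D : 'M[R]_(r, n)) :
  row_free C^T -> row_free D -> exists X, penrose (C *m D) X.
Proof.
move=> fC fD'.
have fD : row_free (D^T)^T by rewrite trmxK.
have uC := gram_unit fC.
have uD := gram_unit fD; rewrite trmxK in uD.
have sym1 : (C^T *m C)^T = C^T *m C by rewrite trmx_mul trmxK.
have sym2 : (D *m D^T)^T = D *m D^T by rewrite trmx_mul trmxK.
exists ((D^T *m invmx (D *m D^T)) *m (invmx (C^T *m C) *m C^T)).
apply: penrose_fact.
- by rewrite -mulmxA mulVmx.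
- by rewrite mulmxA mulmxV.
- by rewrite !trmx_mul trmxK trmx_inv sym1 mulmxA.
- by rewrite !trmx_mul trmxK trmx_inv sym2 mulmxA.
Qed.

Lemma pinv_exists m n (A : 'M[R]_(m, n)) : exists X, penrose A X.
Proof.
have fC : row_free (col_base A)^T by rewrite /row_free mxrank_tr; exact: col_base_full.
have := pinv_fact fC (row_base_free A).
by rewrite mulmx_base.
Qed.

Lemma pinvP m n (A : 'M[R]_(m, n)) : penrose A (pinv A).
Proof. exact: (xgetPex 0 (pinv_exists A)). Qed.
Lemma rk_expect0 m n (At : 'M[R]_(m,n)) bt x z :
  rk_expect_sqdist At bt x z 0 = vnorm (x - z) ^+ 2.
Proof.
rewrite /rk_expect_sqdist (big_pred1 [tuple]) => [|t]; first by rewrite big_nil mul1r.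
by rewrite (tuple0 t) /=; apply/esym/eqP.
Qed.

Lemma rk_expectS m n (At : 'M[R]_(m,n)) bt x z k :
  rk_expect_sqdist At bt x z k.+1 =
  \sum_i rk_prob At i * rk_expect_sqdist At bt (rk_step At bt x i) z k.
Proof.
rewrite /rk_expect_sqdist.
rewrite (reindex (fun p : 'I_m * k.-tuple 'I_m => cons_tuple p.1 p.2)) /=; last first.
  exists (fun t => (thead t, behead_tuple t)).
    by move=> [i s] _ /=; congr pair; apply: val_inj.
  by move=> t _ /=; rewrite [RHS]tuple_eta; apply: val_inj.
rewrite -(pair_big xpredT xpredT (fun i (s : k.-tuple 'I_m) =>
   (\prod_(j <- cons_tuple i s) rk_prob At j) * vnorm (rk_iter At bt x (cons_tuple i s) - z) ^+ 2)) /=.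
apply: eq_bigr => i _; rewrite mulr_sumr; apply: eq_bigr => s _.
by rewrite big_cons mulrA.
Qed.

Lemma rowT m n (At : 'M[R]_(m,n)) i : (row i At)^T = At^T *m delta_mx i 0.
Proof. by rewrite rowE trmx_mul trmx_delta. Qed.

Lemma rk_prob_sum m n (At : 'M[R]_(m,n)) : frob At != 0 -> \sum_i rk_prob At i = 1.
Proof.
move=> fnz; rewrite /rk_prob -mulr_suml.
under eq_bigr do rewrite vnorm_sq.
by rewrite -frob_sq mulfV // expf_neq0.
Qed.

Lemma rk_prob_ge0 m n (At : 'M[R]_(m,n)) i : 0 <= rk_prob At i.
Proof. by rewrite /rk_prob divr_ge0 // sqr_ge0. Qed.

Lemma rk_step_sum m n (At : 'M[R]_(m,n)) bt x z :
  (forall i, row i At != 0) -> frob At != 0 ->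
  \sum_i rk_prob At i * vnorm (rk_step At bt x i - z) ^+ 2 =
  vnorm (x - z) ^+ 2 + (vnorm (bt - At *m z) ^+ 2 - vnorm (At *m (x - z)) ^+ 2) / frob At ^+ 2.
Proof.
move=> rnz fnz.
set e := x - z; set r := bt - At *m z.
have key : forall i, rk_prob At i * vnorm (rk_step At bt x i - z) ^+ 2 =
  (dot (row i At)^T (row i At)^T * dot e e + (r i 0) ^+ 2 - ((At *m e) i 0) ^+ 2) / frob At ^+ 2.
  move=> i; set a := (row i At)^T.
  have an : dot a a != 0.
    apply/eqP => /dot_eq0 /(congr1 trmx); rewrite trmxK trmx0; apply/eqP; exact: rnz.
  have h1 : (row i At *m x) 0 0 - bt i 0 = dot a e - r i 0.
    rewrite /r /e /a dotBr !dotE !mxE.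
    under eq_bigr do rewrite !mxE.
    under [X in _ = X - _ - _]eq_bigr do rewrite !mxE.
    under [X in _ = _ - X - _]eq_bigr do rewrite !mxE.
    ring.
  have h2 : rk_step At bt x i - z = e - ((dot a e - r i 0) / dot a a) *: a.
    by rewrite /rk_step h1 -/a vnorm_sq /e addrAC.
  rewrite h2 /rk_prob -/a vnorm_sq vnorm_sq row_dot -/a.
  rewrite !dotBl !dotBr !dotZl !dotZr (dotC x a) (dotC z a) (dotC z x).
  by field; rewrite fnz an.
rewrite (eq_bigr _ (fun i _ => key i)) -mulr_suml sumrB big_split /= -mulr_suml -frob_sq.
rewrite !vnorm_sq [dot r r]dotE [dot (At *m e) _]dotE.
under [X in _ = _ + (X - _) / _]eq_bigr do rewrite -expr2.
under [X in _ = _ + (_ - X) / _]eq_bigr do rewrite -expr2.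
by field; exact: fnz.
Qed.
Lemma rk_main m n (At : 'M[R]_(m,n)) bt z c2 :
  (forall i, row i At != 0) -> frob At != 0 -> 0 < c2 -> c2 <= frob At ^+ 2 ->
  (forall y, c2 * vnorm (At^T *m y) ^+ 2 <= vnorm (At *m (At^T *m y)) ^+ 2) ->
  forall k x y, x - z = At^T *m y ->
  rk_expect_sqdist At bt x z k <= (1 - c2 / frob At ^+ 2) ^+ k * vnorm (x - z) ^+ 2
      + vnorm (bt - At *m z) ^+ 2 * (1 - (1 - c2 / frob At ^+ 2) ^+ k) / c2.
Proof.
move=> rnz fnz c2p c2F hc.
set F2 := frob At ^+ 2; set q := 1 - c2 / F2.
have F2p : 0 < F2 by rewrite /F2 lt_def sqr_ge0 expf_neq0.
have q0 : 0 <= q by rewrite /q subr_ge0 ler_pdivrMr // mul1r.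
elim=> [|k IH] x y hxy.
  by rewrite rk_expect0 expr0 mul1r subrr mulr0 mul0r addr0.
rewrite rk_expectS.
set K := vnorm (bt - At *m z) ^+ 2 * (1 - q ^+ k) / c2.
have Hi : forall i, rk_expect_sqdist At bt (rk_step At bt x i) z k <=
    q ^+ k * vnorm (rk_step At bt x i - z) ^+ 2 + K.
  move=> i; apply: (IH _ (y - ((((row i At *m x) 0 0 - bt i 0) / vnorm (row i At)^T ^+ 2)) *: delta_mx i 0)).
  rewrite /rk_step mulmxBr -scalemxAr -rowT -hxy; by rewrite addrAC.
apply: le_trans (_ : \sum_i rk_prob At i * (q ^+ k * vnorm (rk_step At bt x i - z) ^+ 2 + K) <= _).
  by apply: ler_sum => i _; apply: ler_wpM2l; [exact: rk_prob_ge0 | exact: Hi].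
under eq_bigr do rewrite mulrDr mulrCA.
rewrite big_split /= -mulr_sumr -mulr_suml rk_prob_sum // mul1r rk_step_sum //.
have hy := hc y; rewrite -hxy in hy.
set E := vnorm (x - z) ^+ 2 in hy *; set G := vnorm (At *m (x - z)) ^+ 2 in hy *.
set Rr := vnorm (bt - At *m z) ^+ 2.
rewrite /K -subr_ge0.
have -> : q ^+ k.+1 * E + Rr * (1 - q ^+ k.+1) / c2 -
   (q ^+ k * (E + (Rr - G) / F2) + Rr * (1 - q ^+ k) / c2) =
   q ^+ k * (G - c2 * E) / F2.
  by rewrite /q exprS; field; rewrite (gt_eqF F2p) (gt_eqF c2p).
apply: divr_ge0; last exact: ltW.
by apply: mulr_ge0; [exact: exprn_ge0 | rewrite subr_ge0].
Qed.
Section Spec.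
Variables (m n : nat) (At : 'M[R]_(m, n)).
Local Notation X := (pinv At).
Local Notation P := (pinv At *m At).
Local Notation M := (At^T *m At).
Local Notation L := (specnorm (pinv At)).

Lemma pen_AXA : At *m X *m At = At. Proof. by case: (pinvP At). Qed.
Lemma pen_XAX : X *m At *m X = X. Proof. by case: (pinvP At). Qed.
Lemma pen_sQ : (At *m X)^T = At *m X. Proof. by case: (pinvP At). Qed.
Lemma pen_sP : P^T = P. Proof. by case: (pinvP At). Qed.

Lemma PP : P *m P = P. Proof. by rewrite mulmxA pen_XAX. Qed.
Lemma AP : At *m P = At. Proof. by rewrite mulmxA pen_AXA. Qed.
Lemma PAt : P *m At^T = At^T. Proof. by rewrite -{1}pen_sP -trmx_mul AP. Qed.
Lemma PX : P *m X = X. Proof. by rewrite pen_XAX. Qed.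
Lemma PM : P *m M = M. Proof. by rewrite mulmxA PAt. Qed.
Lemma QQ : At *m X *m (At *m X) = At *m X. Proof. by rewrite mulmxA pen_AXA. Qed.

Lemma dotP v : dot v (P *m v) = dot (P *m v) (P *m v).
Proof. by rewrite -{1}PP -mulmxA dotM pen_sP. Qed.

Lemma dotMv v : dot v (M *m v) = dot (At *m v) (At *m v).
Proof. by rewrite -mulmxA dotM trmxK. Qed.

Lemma Q_contr w : dot (At *m X *m w) (At *m X *m w) <= dot w w.
Proof.
set Q := At *m X.
have sQ : Q^T = Q by exact: pen_sQ.
have QQ' : Q *m Q = Q by exact: QQ.
have e1 : dot w (Q *m w) = dot (Q *m w) (Q *m w) by rewrite -{1}QQ' -mulmxA dotM sQ.
have : 0 <= dot (w - Q *m w) (w - Q *m w) by exact: dot_ge0.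
rewrite !dotBl !dotBr (dotC (Q *m w) w) e1; lra.
Qed.

Lemma At_nz_X : At != 0 -> X != 0.
Proof. by move=> Anz; apply: contraNneq Anz => X0; rewrite -pen_AXA X0 mulmx0 mul0mx. Qed.

Lemma L_gt0 : At != 0 -> 0 < L.
Proof. by move=> Anz; apply: specnorm_gt0; exact: At_nz_X. Qed.

Lemma range_le e : P *m e = e -> dot e e <= L ^+ 2 * dot (At *m e) (At *m e).
Proof.
move=> Pe; have := specnorm_ub X (At *m e).
by rewrite mulmxA Pe.
Qed.


Lemma P_contr v : dot (P *m v) (P *m v) <= dot v v.
Proof.
have e1 := dotP v.
have : 0 <= dot (v - P *m v) (v - P *m v) by exact: dot_ge0.
rewrite !dotBl !dotBr (dotC (P *m v) v) e1; lra.
Qed.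

Lemma sM : M^T = M. Proof. by rewrite trmx_mul trmxK. Qed.

Lemma range_bound (Anz : At != 0) y :
  L^-1 ^+ 2 * vnorm (At^T *m y) ^+ 2 <= vnorm (At *m (At^T *m y)) ^+ 2.
Proof.
have Lp := L_gt0 Anz.
have Pe : P *m (At^T *m y) = At^T *m y by rewrite mulmxA PAt.
have h := range_le Pe.
rewrite !vnorm_sq exprVn mulrC ler_pdivrMr ?exprn_gt0 // mulrC //.
Qed.

Lemma eig_lb (Anz : At != 0) s : 0 < s -> eigenvalue M (s ^+ 2) -> L^-1 <= s.
Proof.
move=> sp /eigenvalueP [w Hw wnz].
have Lp := L_gt0 Anz.
set e := w^T.
have Me : M *m e = s ^+ 2 *: e.
  by have := congr1 trmx Hw; rewrite trmx_mul linearZ /= sM.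
have Ee : e = (s ^+ 2)^-1 *: (M *m e).
  by rewrite Me scalerA mulVf ?scale1r // expf_neq0 // gt_eqF.
have Pe : P *m e = e by rewrite Ee -scalemxAr mulmxA PM.
have := range_le Pe; rewrite -dotMv Me dotZr.
have enz : e != 0 by apply: contraNneq wnz => e0; rewrite -[w]trmxK -/e e0 trmx0.
have dp : 0 < dot e e.
  by rewrite lt_def dot_ge0 andbT; apply/eqP => /dot_eq0; apply/eqP.
move=> h.
have h1 : 1 <= (L * s) ^+ 2.
  rewrite -(ler_pM2r dp) mul1r exprMn -mulrA; exact: h.
have Ls : 0 < L * s by exact: mulr_gt0.
have h2 : 1 <= L * s.
  move: h1 Ls; set t := L * s => h1 Ls; rewrite expr2 in h1; nra.
by rewrite -[L^-1]mulr1 ler_pdivrMl.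
Qed.

Lemma eig_exists (Anz : At != 0) : eigenvalue M (L^-1 ^+ 2).
Proof.
have Lp := L_gt0 Anz.
set c2 := L^-1 ^+ 2.
have c2L : c2 * L ^+ 2 = 1 by rewrite /c2 exprVn mulVf // expf_neq0 // gt_eqF.
have c2p : 0 <= c2 by rewrite /c2 exprn_ge0 // invr_ge0 ltW.
set N := M - c2 *: P + (1%:M - P).
have Nv : forall v : 'cV[R]_n, N *m v = M *m v - c2 *: (P *m v) + (v - P *m v).
  by move=> v; rewrite /N !mulmxDl !mulNmx -scalemxAl mul1mx.
have sN : N^T = N.
  by rewrite /N !linearD /= !linearN /= linearZ /= trmx1 pen_sP sM.
case: (boolP (N \in unitmx)) => Nu; last first.
  have [w wN wnz] : exists2 w : 'rV_n, w *m N = 0 & w != 0.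
    apply: contrapT => H; move/negP: Nu; apply; rewrite -row_free_unit.
    apply: inj_row_free => w wN; case: (eqVneq w 0) => // wnz; exfalso; apply: H.
    by exists w.
  set v := w^T.
  have Nv0 : N *m v = 0 by rewrite -sN -trmx_mul wN trmx0.
  have h1 : M *m v = c2 *: (P *m v).
    have := congr1 (mulmx P) Nv0.
    rewrite Nv !mulmxDr !mulmxN -scalemxAr (mulmxA P M) (mulmxA P P) PM PP subrr addr0 mulmx0.
    by move/eqP; rewrite subr_eq0 => /eqP.
  have h2 : v = P *m v.
    by move: Nv0; rewrite Nv h1 subrr add0r => /eqP; rewrite subr_eq0 => /eqP.
  have h3 : M *m v = c2 *: v by rewrite h1 -h2.
  apply/eigenvalueP; exists w => //.
  by rewrite -[w]trmxK -/v -{1}sM -trmx_mul h3 linearZ.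
exfalso.
have [v0 Av0] := exists_nz_image Anz.
have v0nz : v0 != 0 by apply: contraNneq Av0 => ->; rewrite mulmx0.
have psd : forall v : 'cV[R]_n, 0 <= dot v (N *m v).
  move=> v; rewrite Nv dotDr dotBr dotZr dotBr dotMv dotP.
  have PPv : P *m (P *m v) = P *m v by rewrite mulmxA PP.
  have h := range_le PPv.
  rewrite mulmxA AP in h.
  have h' := P_contr v.
  have : c2 * dot (P *m v) (P *m v) <= dot (At *m v) (At *m v).
    apply: le_trans (ler_wpM2l c2p h) _; rewrite mulrA c2L mul1r //.
  lra.
have Nnz : N != 0.
  apply: contraNneq v0nz => N0; by rewrite -(mulKmx Nu v0) N0 mul0mx mulmx0.
have Inz : invmx N != 0.
  apply: contraNneq v0nz => N0; by rewrite -(mulKmx Nu v0) N0 mul0mx.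
set K := specnorm N; set K' := specnorm (invmx N).
have Kp : 0 < K by exact: specnorm_gt0.
have K'p : 0 < K' by exact: specnorm_gt0.
have key : forall v : 'cV[R]_n, dot v v <= K' ^+ 2 * K * dot v (N *m v).
  move=> v; set u := N *m v.
  have h1 : dot v v <= K' ^+ 2 * dot u u.
    by have := specnorm_ub (invmx N) u; rewrite /u mulKmx.
  have h2 : dot u u = dot v (N *m u) by rewrite dotM sN.
  have h3 := psd_cs v u sN psd.
  have h4 : dot u (N *m u) <= K * dot u u.
    have c := cs u (N *m u).
    have s := specnorm_ub N u.
    have U0 := dot_ge0 u.
    have : dot u (N *m u) ^+ 2 <= (K * dot u u) ^+ 2.
      apply: le_trans c _; rewrite exprMn expr2.
      rewrite -/K in s; rewrite -expr2; nra.
    by apply: sq_le; rewrite mulr_ge0 // ltW.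
  rewrite -h2 in h3.
  have U0 := dot_ge0 u.
  have D0 := psd v.
  have : dot u u <= K * dot v (N *m v).
    have [U00|U0p] := eqVneq (dot u u) 0.
      by rewrite U00 mulr_ge0 // ltW.
    have Up : 0 < dot u u by rewrite lt_def U0p U0.
    nra.
  nra.
set T := K' ^+ 2 * K.
have Tp : 0 < T by rewrite /T mulr_gt0 // exprn_gt0.
have D1 : 0 < 1 + T * c2 by nra.
have bound : forall w : 'cV[R]_m, dot (X *m w) (X *m w) <= (T / (1 + T * c2)) * dot w w.
  move=> w; set e := X *m w.
  have Pe : P *m e = e by rewrite /e mulmxA PX.
  have k := key e.
  rewrite Nv Pe subrr addr0 dotBr dotZr dotMv in k.
  have q : dot (At *m e) (At *m e) <= dot w w by rewrite /e mulmxA; exact: Q_contr.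
  have E0 := dot_ge0 e.
  rewrite mulrAC ler_pdivlMr //.
  rewrite -/T in k.
  nra.
have hB : 0 <= T / (1 + T * c2) by rewrite divr_ge0 // ltW.
have := @specnorm_le _ _ X (Num.sqrt (T / (1 + T * c2))) _ Av0 (sqrtr_ge0 _).
rewrite sqr_sqrtr // => /(_ bound) hL.
have hL2 : L ^+ 2 <= T / (1 + T * c2).
  rewrite -(sqr_sqrtr hB); rewrite !expr2; apply: ler_pM => //; exact: ltW.
move: hL2; rewrite ler_pdivlMr // => hL2.
have : L ^+ 2 <= 0 by nra.
by rewrite leNgt exprn_gt0.
Qed.

End Spec.

Lemma vnormN n (v : 'cV[R]_n) : vnorm (- v) = vnorm v.
Proof. by rewrite !vnormE dotNl dotNr opprK. Qed.

Lemma sigma_minE m n (At : 'M[R]_(m, n)) : At != 0 ->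
  sigma_min At = (specnorm (pinv At))^-1.
Proof.
move=> Anz; rewrite /sigma_min.
set S := [set s : R | 0 < s /\ eigenvalue (At^T *m At) (s ^+ 2)]%classic.
have Lp := L_gt0 Anz.
have inS : S (specnorm (pinv At))^-1 by split; [rewrite invr_gt0 | exact: eig_exists].
have hlb : has_lbound S by exists 0 => s [sp _]; exact: ltW.
apply/eqP; rewrite eq_le; apply/andP; split.
  exact: (ge_inf hlb inS).
apply: lb_le_inf; first by exists (specnorm (pinv At))^-1.
by move=> s [sp hs]; exact: eig_lb.
Qed.

End Aux.

Unset Implicit Arguments.

Theorem corollary3p4 (R : realType) (m n : nat)
  (A : 'M[R]_(m, n)) (E : 'M[R]_m) (F : 'M[R]_n) (b eps : 'cV[R]_m)
  (x0 : 'cV[R]_n) :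
  (1%:M + E) \in unitmx ->
  (1%:M + F) \in unitmx ->
  let At := (1%:M + E) *m A *m (1%:M + F) in
  let dA := E *m A + A *m F + E *m A *m F in
  let bt := b + eps in
  (forall i : 'I_m, row i At != 0) ->
  (exists x : 'cV[R]_n, A *m x = b) ->
  let xLS := pinv A *m b in
  (exists y : 'cV[R]_m, x0 - xLS = At^T *m y) ->
  let Rt := (specnorm (pinv At)) ^+ 2 * (frob At) ^+ 2 in
  forall k : nat,
    rk_expect_sqdist At bt x0 xLS k <=
      (1 - Rt^-1) ^+ k * (vnorm (x0 - xLS)) ^+ 2
      + (vnorm (dA *m xLS - eps)) ^+ 2 / (sigma_min At) ^+ 2.
Proof.
move=> _ _ At dA bt rnz [x hx] xLS [y hy] Rt k.
have rhs0 : 0 <= (vnorm (dA *m xLS - eps)) ^+ 2 / (sigma_min At) ^+ 2.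
  by rewrite divr_ge0 // sqr_ge0.
have [A0|Anz] := eqVneq At 0.
  have e0 : x0 - xLS = 0 by rewrite hy A0 trmx0 mul0mx.
  case: k => [|k].
    by rewrite rk_expect0 e0 /vnorm big1 ?sqrtr0 ?expr0n ?mulr0 ?add0r // => i _; rewrite mxE expr0n.
  rewrite rk_expectS big1; last first.
    move=> i _; exfalso; move: (rnz i); rewrite A0 => /eqP; apply.
    by apply/matrixP => a c; rewrite !mxE.
  by rewrite e0 /vnorm big1 ?sqrtr0 ?expr0n ?mulr0 ?add0r // => i _; rewrite mxE expr0n.
set L := specnorm (pinv At).
have Lp : 0 < L := L_gt0 Anz.
set c2 := L^-1 ^+ 2.
have c2p : 0 < c2 by rewrite /c2 exprn_gt0 // invr_gt0.
have fnz : frob At != 0.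
  apply/eqP => f0; have [v Hv] := exists_nz_image Anz.
  have := dot_frob At v; rewrite f0 expr0n /= mul0r => h.
  have : dot (At *m v) (At *m v) = 0 by apply/eqP; rewrite eq_le h dot_ge0.
  by move/dot_eq0/eqP; rewrite (negbTE Hv).
have c2F : c2 <= frob At ^+ 2.
  have /eigenvalueP [w Hw wnz] := eig_exists Anz.
  set e := w^T.
  have Me : (At^T *m At) *m e = c2 *: e.
    by have := congr1 trmx Hw; rewrite trmx_mul linearZ /= sM.
  have enz : e != 0 by apply: contraNneq wnz => e0; rewrite -[w]trmxK -/e e0 trmx0.
  have dp : 0 < dot e e.
    by rewrite lt_def dot_ge0 andbT; apply/eqP => /dot_eq0; apply/eqP.
  have := dot_frob At e; rewrite -dotMv Me dotZr.
  by rewrite ler_pM2r.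
have hmain := @rk_main _ _ _ At bt xLS c2 rnz fnz c2p c2F (range_bound Anz) k x0 y hy.
apply: le_trans hmain _.
have Rt1 : 1 - Rt^-1 = 1 - c2 / frob At ^+ 2.
  by rewrite /Rt /c2 invfM exprVn.
rewrite Rt1 lerD2l.
have Ab : A *m xLS = b.
  by rewrite /xLS -hx !mulmxA; case: (pinvP A) => ->.
have AtE : At *m xLS = b + dA *m xLS.
  rewrite -Ab /At /dA -mulmxDl.
  congr (_ *m _).
  rewrite !mulmxDl !mulmxDr !mul1mx !mulmx1.
  by rewrite -!addrA; congr (_ + _); rewrite addrCA.
have -> : bt - At *m xLS = - (dA *m xLS - eps).
  by rewrite AtE /bt opprB opprD addrACA subrr add0r.
rewrite vnormN sigma_minE // -/L -/c2.
set q := 1 - c2 / frob At ^+ 2.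
have q0 : 0 <= q.
  by rewrite /q subr_ge0 ler_pdivrMr ?mul1r // lt_def sqr_ge0 expf_neq0.
rewrite -mulrA; apply: ler_wpM2l; first exact: sqr_ge0.
rewrite -[c2^-1]mul1r; apply: ler_piMl; first by rewrite divr_ge0 // ltW.
by rewrite gerBl exprn_ge0.
Qed.
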